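(* Let $p,q>0$ and $\alpha,\beta,\nu,\gamma\in\mathbb{R}$. Let $f:\mathbb{N}\to[0,\infty)$ be a function with $f(0)=0$, and let $\{|n\rangle\}_{n\in\mathbb{N}}$ be an orthonormal basis of a Hilbert space. Define operators $a,a^{\dagger},N,K$ on the span of this basis by $$a|n\rangle=\sqrt{f(n)}\,|n-1\rangle,\quad a^{\dagger}|n\rangle=\sqrt{f(n+1)}\,|n+1\rangle,\quad N|n\rangle=n|n\rangle,\quad K|n\rangle=(-1)^n|n\rangle$$ (with $a|0\rangle=0$), and let $q^{\alpha N+\beta}$ act by $q^{\alpha N+\beta}|n\rangle=q^{\alpha n+\beta}|n\rangle$. Suppose that these operators satisfy $$aa^{\dagger}-p^{\nu}a^{\dagger}a=(1+2\gamma K)\,q^{\alpha N+\beta}$$ on every basis vector $|n\rangle$. Then for all $n\in\mathbb{N}$, $$f(n)=\begin{cases} q^{\beta}\left(\dfrac{p^{n\nu}-q^{n\alpha}}{p^{\nu}-q^{\alpha}}+2\gamma\,\dfrac{p^{n\nu}-(-1)^{n}q^{n\alpha}}{p^{\nu}+q^{\alpha}}\right), & \text{if } p^{\nu}\neq q^{\alpha},\\[2ex] \left(n+2\gamma\,\dfrac{1-(-1)^{n}}{2}\right)q^{(n-1)\alpha+\beta}, & \text{if } p^{\nu}=q^{\alpha}.\end{cases}$$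
   Context: This is the Fock realization of the $(p,q;\alpha,\beta,\nu;\gamma)$-deformed oscillator algebra, generated by $a,a^{\dagger},N,K$ subject to $aa^{\dagger}-p^{\nu}a^{\dagger}a=(1+2\gamma K)q^{\alpha N+\beta}$, $[N,a]=-a$, $[N,a^{\dagger}]=a^{\dagger}$, $Ka=-aK$, $Ka^{\dagger}=-a^{\dagger}K$, $[N,K]=0$, $N^\dagger=N$, $K^\dagger=K$; the function $f$ is called the structure function of the deformation. Here $\mathbb{N}=\{0,1,2,\dots\}$. *)

(* Defs.v *)
From Stdlib Require Import Reals Lra.
Open Scope R_scope.

(* Vectors in the span of the orthonormal basis {|n>} are represented by
   their coordinate functions nat -> R (coordinate m = <m|v>). *)
Definition vec := nat -> R.

Definition ket (n : nat) : vec := fun m => if Nat.eqb m n then 1 else 0.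

(* a |n> = sqrt(f n) |n-1>,  a|0> = 0 *)
Definition ann (f : nat -> R) (v : vec) : vec := fun m => sqrt (f (S m)) * v (S m).

(* a^dagger |n> = sqrt(f (n+1)) |n+1> *)
Definition cre (f : nat -> R) (v : vec) : vec :=
  fun m => match m with O => 0 | S k => sqrt (f m) * v k end.

Definition numop (v : vec) : vec := fun m => INR m * v m.

Definition parity (v : vec) : vec := fun m => (-1) ^ m * v m.

Definition qpow (q alpha beta : R) (v : vec) : vec :=
  fun m => Rpower q (alpha * INR m + beta) * v m.

Definition one_plus_2gK (gamma : R) (v : vec) : vec :=
  fun m => v m + 2 * gamma * parity v m.

(* Main.v *)
Require Import Defs.
From Stdlib Require Import Reals Lra Lia.
Open Scope R_scope.

Lemma rp_pow (x y : R) (n : nat) : 0 < x -> Rpower x (INR n * y) = (Rpower x y) ^ n.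
Proof.
  intro Hx. rewrite Rmult_comm, <- Rpower_mult. apply Rpower_pow. apply exp_pos.
Qed.

Theorem proposition1 (p q alpha beta nu gamma : R) (f : nat -> R) :
  0 < p -> 0 < q ->
  (forall n, 0 <= f n) -> f 0%nat = 0 ->
  (forall n m,
     ann f (cre f (ket n)) m - Rpower p nu * cre f (ann f (ket n)) m
     = one_plus_2gK gamma (qpow q alpha beta (ket n)) m) ->
  forall n : nat,
    (Rpower p nu <> Rpower q alpha ->
     f n = Rpower q beta *
       ((Rpower p (INR n * nu) - Rpower q (INR n * alpha)) / (Rpower p nu - Rpower q alpha)
        + 2 * gamma * (Rpower p (INR n * nu) - (-1) ^ n * Rpower q (INR n * alpha))
                    / (Rpower p nu + Rpower q alpha))) /\
    (Rpower p nu = Rpower q alpha ->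
     f n = (INR n + 2 * gamma * ((1 - (-1) ^ n) / 2))
           * Rpower q ((INR n - 1) * alpha + beta)).
Proof.
  intros Hp Hq Hf H0 H.
  set (P := Rpower p nu). set (Q := Rpower q alpha). set (B := Rpower q beta).
  assert (HP : 0 < P) by apply exp_pos.
  assert (HQ : 0 < Q) by apply exp_pos.
  assert (Hrec : forall n, f (S n) = P * f n + (1 + 2 * gamma * (-1) ^ n) * Q ^ n * B).
  { intro n. specialize (H n n).
    unfold ann, cre, one_plus_2gK, qpow, parity, ket in H.
    rewrite Nat.eqb_refl in H.
    assert (Hs : forall k, sqrt (f k) * (sqrt (f k) * 1) = f k).
    { intro k. rewrite Rmult_1_r. apply sqrt_sqrt. apply Hf. }
    replace (Rpower q (alpha * INR n + beta)) with (Q ^ n * B) in H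
      by (rewrite Rpower_plus, (Rmult_comm alpha), rp_pow by exact Hq; reflexivity).
    destruct n as [|k].
    - simpl in H. rewrite Hs in H. simpl. rewrite H0. rewrite Rmult_0_r, Rminus_0_r in H; rewrite H; simpl; ring.
    - simpl in H. rewrite Nat.eqb_refl, Hs, Hs in H. fold P in H. replace (f (S (S k))) with (P * f (S k) + (f (S (S k)) - P * f (S k))) by ring. rewrite H; simpl; ring. }
  intro n. split.
  - intro Hne. rewrite !rp_pow by assumption. fold P Q.
    assert (P - Q <> 0) by lra. assert (P + Q <> 0) by lra.
    induction n as [|n IH].
    + rewrite H0. simpl. field. split; assumption.
    + rewrite Hrec, IH. simpl. field. split; assumption.
  - intro Heq.
    destruct n as [|k].
    + rewrite H0. simpl. lra.
    + replace ((INR (S k) - 1) * alpha + beta) with (INR k * alpha + beta)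
        by (rewrite S_INR; ring).
      rewrite Rpower_plus, rp_pow by assumption. fold Q B.
      induction k as [|k IH].
      * rewrite Hrec, H0. simpl. field.
      * rewrite Hrec, IH, Heq. rewrite !S_INR. simpl. field.
Qed.
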